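(* Let $G$ be the complete graph on vertices $o,u,v,d$ and $H$ have the single OD-pair $(o,d)$. Take two classes with $\lambda(I^1)=3$, $\lambda(I^2)=4$ and the following costs, where $M\ge 100$ is a constant: class 1: $c_{(o,u)}(x)=x$, $c_{(u,v)}(x)=x+18$, $c_{(v,d)}(x)=x$, $c_{(o,d)}(x)=7x$, and $c_{(o,v)}=c_{(v,u)}=c_{(u,d)}=x+M$; class 2: $c_{(o,u)}(x)=5x$, $c_{(o,v)}(x)=x$, $c_{(u,d)}(x)=x$, $c_{(v,d)}(x)=5x$, $c_{(o,d)}(x)=x+10$, and $c_{(u,v)}=c_{(v,u)}=x+M$. Let $\sigma$ have all class 1 users on $ouvd$ and all class 2 users on $od$; let $\hat\sigma$ have all class 1 users on $od$, half of the class 2 users (measure $2$) on $oud$ and the other half on $ovd$. Then $\sigma$ and $\hat\sigma$ are both equilibria and induce different flows (e.g. flow $4$ versus $3$ on arc $(o,d)$). In particular a two-terminal network can have multiple equilibrium flows with only two classes of users.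
   Context: Model: the directed version of $G$ replaces each edge by two opposite arcs; routes are the directed $(o,d)$-paths ($od$, $oud$, $ovd$, $ouvd$, $ovud$); costs on arcs not listed (which lie on no $(o,d)$-path) are irrelevant. Users form a bounded interval with Lebesgue measure $\lambda$; the flow on an arc is the measure of users whose route contains it; a user's route cost is the sum over its arcs of his class's cost function evaluated at the arc flow; an equilibrium is a strategy profile in which every user's route has minimal cost among all $(o,d)$-routes. *)

(* Defs.v *)
From Stdlib Require Import Reals List.
Import ListNotations.
Open Scope R_scope.

Inductive node := o | u | v | d.
Definition arc := (node * node)%type.

(* The (o,d)-routes in the directed version of K4 on {o,u,v,d}. *)
Inductive route := R_od | R_oud | R_ovd | R_ouvd | R_ovud.

Definition arcs (r : route) : list arc :=
  match r with
  | R_od => [(o,d)]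
  | R_oud => [(o,u); (u,d)]
  | R_ovd => [(o,v); (v,d)]
  | R_ouvd => [(o,u); (u,v); (v,d)]
  | R_ovud => [(o,v); (v,u); (u,d)]
  end.

(* Users: I = [0,7); class 1 = [0,3) (measure 3), class 2 = [3,7) (measure 4). *)
Definition users (x : R) : Prop := 0 <= x < 7.
Definition cls (x : R) : nat := if Rlt_dec x 3 then 1%nat else 2%nat.

(* Arc cost functions; arcs lying on no (o,d)-path get cost 0 (irrelevant). *)
Definition cost (M : R) (k : nat) (a : arc) (x : R) : R :=
  match k with
  | 1%nat =>
    match a with
    | (o,u) => x | (u,v) => x + 18 | (v,d) => x | (o,d) => 7 * x
    | (o,v) => x + M | (v,u) => x + M | (u,d) => x + M
    | _ => 0 end
  | _ =>
    match a with
    | (o,u) => 5 * x | (o,v) => x | (u,d) => x | (v,d) => 5 * x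
    | (o,d) => x + 10 | (u,v) => x + M | (v,u) => x + M
    | _ => 0 end
  end.

Definition route_cost (M : R) (k : nat) (f : arc -> R) (r : route) : R :=
  fold_right (fun a s => cost M k a (f a) + s) 0 (arcs r).

Definition profile := R -> route.

Definition users_on (s : profile) (a : arc) (x : R) : Prop :=
  users x /\ In a (arcs (s x)).

(* Lebesgue measure of an elementary set: S is a finite disjoint union of
   half-open intervals [a_i, b_i) and m is the sum of their lengths. *)
Definition has_measure (S : R -> Prop) (m : R) : Prop :=
  exists l : list (R * R),
    (forall p, In p l -> fst p <= snd p) /\
    ForallOrdPairs (fun p q => snd p <= fst q \/ snd q <= fst p) l /\
    (forall x, S x <-> exists p, In p l /\ fst p <= x < snd p) /\
    m = fold_right (fun p t => snd p - fst p + t) 0 l.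

Definition induces (s : profile) (f : arc -> R) : Prop :=
  forall a, has_measure (users_on s a) (f a).

Definition equilibrium (M : R) (s : profile) : Prop :=
  exists f, induces s f /\
    forall x, users x -> forall r,
      route_cost M (cls x) f (s x) <= route_cost M (cls x) f r.

Definition sigma0 : profile := fun x => if Rlt_dec x 3 then R_ouvd else R_od.
Definition sigma1 : profile := fun x =>
  if Rlt_dec x 3 then R_od else if Rlt_dec x 5 then R_oud else R_ovd.

(* Main.v *)
Require Import Defs.
From Stdlib Require Import Reals List Lra.
Import ListNotations.
Open Scope R_scope.

Definition l0 (a : arc) : list (R * R) :=
  match a with
  | (o,u) | (u,v) | (v,d) => [(0,3)]
  | (o,d) => [(3,7)]
  | _ => [] end.

Definition l1 (a : arc) : list (R * R) :=
  match a with
  | (o,d) => [(0,3)]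
  | (o,u) | (u,d) => [(3,5)]
  | (o,v) | (v,d) => [(5,7)]
  | _ => [] end.

Definition len (l : list (R*R)) := fold_right (fun p t => snd p - fst p + t) 0 l.

Ltac solve_iff :=
  let x := fresh "x" in
  intro x; unfold users_on, users, sigma0, sigma1; split;
  [ intros [Hu Hin];
    repeat (destruct (Rlt_dec x _)); simpl in Hin;
    repeat match type of Hin with _ \/ _ => destruct Hin as [Hin|Hin]; [try discriminate Hin|] end;
    try contradiction;
    (eexists; split; [simpl; left; reflexivity | simpl; lra])
  | intros [p [Hp Hb]]; simpl in Hp;
    repeat match type of Hp with _ \/ _ => destruct Hp as [Hp|Hp]; [subst p|] end; try contradiction;
    (simpl in Hb; split; [lra|
    repeat (destruct (Rlt_dec x _); try lra); simpl; tauto]) ].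

Ltac solve_meas l :=
  intros [a1 a2]; exists (l (a1,a2)); 
  destruct a1, a2; simpl; (split; [intros p Hp; repeat match type of Hp with _ \/ _ => destruct Hp as [Hp|Hp]; [subst p; simpl; lra|] end; contradiction|
  split; [repeat constructor| split; [solve_iff | unfold len; simpl; lra]]]).

Lemma ind0 : induces sigma0 (fun a => len (l0 a)).
Proof. unfold induces. solve_meas l0. Qed.

Lemma ind1 : induces sigma1 (fun a => len (l1 a)).
Proof. unfold induces. solve_meas l1. Qed.

Theorem mainTheorem17 (M : R) (HM : 100 <= M) :
  equilibrium M sigma0 /\ equilibrium M sigma1 /\
  has_measure (users_on sigma0 (o,d)) 4 /\
  has_measure (users_on sigma1 (o,d)) 3.
Proof.
  split; [|split; [|split]].
  - exists (fun a => len (l0 a)); split; [exact ind0|].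
    intros x Hx r; unfold cls, sigma0; destruct (Rlt_dec x 3);
      destruct r; unfold route_cost; simpl; lra.
  - exists (fun a => len (l1 a)); split; [exact ind1|].
    intros x Hx r; unfold cls, sigma1; destruct (Rlt_dec x 3); [|destruct (Rlt_dec x 5)];
      destruct r; unfold route_cost; simpl; lra.
  - generalize (ind0 (o,d)); simpl; intro H; replace 4 with (7 - 3 + 0) by lra; exact H.
  - generalize (ind1 (o,d)); simpl; intro H; replace 3 with (3 - 0 + 0) by lra; exact H.
Qed.
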